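(* Let $G$ be a graph, let $x$ be a vertex of degree at least $3$, and suppose that $G$ contains $t\geq 2$ twin stems of length $2$ rooted at $x$, i.e. paths $x u_i u_i'$ ($1\le i\le t$) with all $u_i,u_i'$ distinct, each $u_i$ of degree $2$ (adjacent only to $x$ and $u_i'$) and each $u_i'$ of degree $1$. Then $Dist(G)\geq \psi(t)$.
   Context: $Dist(H)$ is the least $t$ such that $H$ has a labeling $V(H)\to\{1,\dots,t\}$ preserved by no non-identity automorphism of $H$. The function $\psi:\mathbb{N}\setminus\{1\}\to\mathbb{N}\setminus\{1\}$ is defined by $\psi(m)=k$, where $k$ is the least number (with $k\ge 2$) such that $m\leq 2\binom{k}{2}+k$. For example $\psi(19)=5$. *)

(* Defs.v *)
From mathcomp Require Import all_boot all_fingroup.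
Set Implicit Arguments. Unset Strict Implicit. Unset Printing Implicit Defensive.

Definition simple_graph (T : finType) (adj : rel T) : Prop :=
  symmetric adj /\ irreflexive adj.

Definition deg (T : finType) (adj : rel T) (x : T) : nat := #|[set y | adj x y]|.

Definition is_aut (T : finType) (adj : rel T) (f : {perm T}) : bool :=
  [forall x, forall y, adj (f x) (f y) == adj x y].

Definition distinguishing (T : finType) (adj : rel T) (t : nat) : bool :=
  [exists c : {ffun T -> 'I_t}, forall f : {perm T},
    (is_aut adj f && [forall x, c (f x) == c x]) ==> (f == 1%g)].

Lemma distinguishing_exists (T : finType) (adj : rel T) :
  exists t, distinguishing adj t.
Proof.
exists #|T|; apply/existsP; exists [ffun x => enum_rank x].
apply/forallP => f; apply/implyP => /andP [_ /forallP Hf].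
apply/eqP/permP => x; rewrite perm1.
by apply: enum_rank_inj; move/eqP: (Hf x); rewrite !ffunE.
Qed.

Definition Dist (T : finType) (adj : rel T) : nat :=
  ex_minn (distinguishing_exists adj).

Lemma psi_exists (m : nat) : exists k, (2 <= k) && (m <= 2 * 'C(k, 2) + k).
Proof.
exists m.+2; apply/andP; split => //.
by apply: leq_trans (leq_addl _ _); apply: leqW; apply: leqW.
Qed.

Definition psi (m : nat) : nat := ex_minn (psi_exists m).

(* Main.v *)
Require Import Defs.
From mathcomp Require Import all_boot all_fingroup.
From mathcomp Require Import zify.
Set Implicit Arguments. Unset Strict Implicit. Unset Printing Implicit Defensive.

Section Swap.
Variables (T : finType) (adj : rel T) (x a1 a2 b1 b2 : T).
Hypothesis sym : symmetric adj.
Hypotheses (d12 : a1 != a2) (e12 : b1 != b2) (ab11 : a1 != b1) (ab12 : a1 != b2)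
  (ab21 : a2 != b1) (ab22 : a2 != b2) (xa1 : x != a1) (xa2 : x != a2)
  (xb1 : x != b1) (xb2 : x != b2).
Hypotheses (Na1 : forall y, adj a1 y = (y == x) || (y == b1))
  (Na2 : forall y, adj a2 y = (y == x) || (y == b2))
  (Nb1 : forall y, adj b1 y = (y == a1))
  (Nb2 : forall y, adj b2 y = (y == a2)).

Definition sw a := if a == a1 then a2 else if a == a2 then a1 else
  if a == b1 then b2 else if a == b2 then b1 else a.

Lemma swa1 : sw a1 = a2. Proof. by rewrite /sw eqxx. Qed.
Lemma swa2 : sw a2 = a1. Proof. by rewrite /sw eq_sym (negbTE d12) eqxx. Qed.
Lemma swb1 : sw b1 = b2.
Proof. by rewrite /sw eq_sym (negbTE ab11) eq_sym (negbTE ab21) eqxx. Qed.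
Lemma swb2 : sw b2 = b1.
Proof. by rewrite /sw eq_sym (negbTE ab12) eq_sym (negbTE ab22) eq_sym (negbTE e12) eqxx. Qed.
Lemma fix_out c : c \notin [:: a1; a2; b1; b2] -> sw c = c.
Proof. rewrite !inE /sw; by do ! case: eqP. Qed.

Lemma swK : involutive sw.
Proof.
move=> a; have [Ha|Ha] := boolP (a \in [:: a1; a2; b1; b2]); last by rewrite !fix_out.
move: Ha; rewrite !inE => /or4P [] /eqP ->.
- by rewrite swa1 swa2.
- by rewrite swa2 swa1.
- by rewrite swb1 swb2.
- by rewrite swb2 swb1.
Qed.

Lemma sw_inj : injective sw. Proof. exact: inv_inj swK. Qed.

Lemma swx : sw x = x.
Proof. by rewrite /sw (negbTE xa1) (negbTE xa2) (negbTE xb1) (negbTE xb2). Qed.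

Lemma sw_adjS a b : a \in [:: a1; a2; b1; b2] -> adj (sw a) (sw b) = adj a b.
Proof.
rewrite !inE => /or4P [] /eqP ->.
- by rewrite swa1 Na2 Na1 -{1}swx -swb1 !(inj_eq sw_inj).
- by rewrite swa2 Na2 Na1 -{1}swx -swb2 !(inj_eq sw_inj).
- by rewrite swb1 Nb2 Nb1 -swa1 !(inj_eq sw_inj).
- by rewrite swb2 Nb2 Nb1 -swa2 !(inj_eq sw_inj).
Qed.

Lemma sw_adj a b : adj (sw a) (sw b) = adj a b.
Proof.
have [Ha|Ha] := boolP (a \in [:: a1; a2; b1; b2]); first exact: sw_adjS.
have [Hb|Hb] := boolP (b \in [:: a1; a2; b1; b2]).
  by rewrite sym (sw_adjS _ Hb) sym.
by rewrite !fix_out.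
Qed.
End Swap.

Lemma bin2_id d : 2 * 'C(d, 2) + d = d * d.
Proof.
elim: d => [//|d IH]; rewrite binS bin1; lia.
Qed.

Lemma nbr2 (T : finType) (adj : rel T) v p q :
  deg adj v = 2 -> adj v p -> adj v q -> p != q ->
  forall y, adj v y = (y == p) || (y == q).
Proof.
move=> Hd Hp Hq Hpq y.
have E : [set y | adj v y] = [set p; q].
  apply/esym/eqP; rewrite eqEcard; apply/andP; split.
    by apply/subsetP => z; rewrite !inE => /orP [] /eqP ->; rewrite ?Hp ?Hq.
  by rewrite cards2 Hpq; move: Hd; rewrite /deg => ->.
have : (y \in [set y | adj v y]) = (y \in [set p; q]) by rewrite E.
by rewrite !inE.
Qed.

Lemma nbr1 (T : finType) (adj : rel T) v p :
  deg adj v = 1 -> adj v p -> forall y, adj v y = (y == p).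
Proof.
move=> Hd Hp y.
have E : [set y | adj v y] = [set p].
  apply/esym/eqP; rewrite eqEcard; apply/andP; split.
    by apply/subsetP => z; rewrite !inE => /eqP ->.
  by rewrite cards1; move: Hd; rewrite /deg => ->.
have : (y \in [set y | adj v y]) = (y \in [set p]) by rewrite E.
by rewrite !inE.
Qed.

Theorem lemma2p5 (T : finType) (adj : rel T) (x : T) (t : nat)
  (u u' : 'I_t -> T) :
  simple_graph adj ->
  3 <= deg adj x ->
  2 <= t ->
  injective u -> injective u' ->
  (forall i j, u i != u' j) ->
  (forall i, adj x (u i)) ->
  (forall i, adj (u i) (u' i)) ->
  (forall i, deg adj (u i) = 2) ->
  (forall i, deg adj (u' i) = 1) ->
  psi t <= Dist adj.
Proof.
move=> [sym irr] dx t2 iu iu' uu' xu uu du du'.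
have xu' i : x != u' i.
  by apply/eqP => E; move: dx; rewrite E du'.
have xuu i : x != u i.
  by apply/eqP => E; move: (xu i); rewrite -E irr.
have Nu i y : adj (u i) y = (y == x) || (y == u' i).
  apply: nbr2; [exact: du | by rewrite sym | exact: uu | exact: xu'].
have Nu' i y : adj (u' i) y = (y == u i).
  by apply: nbr1 => //; rewrite sym.
rewrite /Dist; case: ex_minnP => d /existsP [c Hc] _.
pose g i := (c (u i), c (u' i)).
have ginj : injective g.
  move=> i j /eqP; rewrite xpair_eqE => /andP [/eqP h1 /eqP h2].
  apply/eqP; apply/negPn/negP => nij.
  have d12 : u i != u j by rewrite (inj_eq iu).
  have e12 : u' i != u' j by rewrite (inj_eq iu').
  have H4 := (d12, e12, uu' i i, uu' i j, uu' j i, uu' j j).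
  pose f := perm (sw_inj d12 e12 (uu' i i) (uu' i j) (uu' j i) (uu' j j)).
  have := forallP Hc f.
  have -> : is_aut adj f.
    apply/forallP => a; apply/forallP => b; rewrite !permE.
    by rewrite (sw_adj sym d12 e12 (uu' i i) (uu' i j) (uu' j i) (uu' j j)
     (xuu i) (xuu j) (xu' i) (xu' j) (Nu i) (Nu j) (Nu' i) (Nu' j)).
  have -> : [forall y, c (f y) == c y].
    apply/forallP => a; rewrite permE.
    have [Ha|Ha] := boolP (a \in [:: u i; u j; u' i; u' j]); last first.
      by rewrite fix_out.
    move: Ha; rewrite !inE => /or4P [] /eqP ->.
    - by rewrite swa1 h1.
    - by rewrite swa2 ?h1 //.
    - by rewrite swb1 ?h2 //.
    - by rewrite swb2 ?h2 //.
  move=> /= /eqP /(congr1 (fun p : {perm T} => p (u i))).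
  rewrite permE perm1 swa1 => /eqP; by rewrite eq_sym (negbTE d12).
have := leq_card g ginj; rewrite card_prod !card_ord => td.
rewrite /psi; case: ex_minnP => k _ Hmin; apply: Hmin.
apply/andP; split; rewrite ?bin2_id; nia.
Qed.
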